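(* Let $(\Omega,\mathcal{F},\mathbb{P})$ be a nonatomic probability space, let $\gamma>0$, let $u(x)=1-e^{-\gamma x}$ for $x\in\mathbb{R}$, let $\alpha<1$, and set $\mathcal{A}_u^\infty=\{X\in L^\infty:\mathbb{E}[u(X)]\ge\alpha\}$. Let $S=(S_0,S_T)$ be a traded asset with $S_T\in L^\infty$ and assume $\rho_{\mathcal{A}_u^\infty,S}$ is finite-valued on $L^\infty$. Then $\mathrm{Index}_{\mathrm{fin}}(\rho_{\mathcal{A}_u^\infty,S})=\infty$.
   Context: A traded asset is $S=(S_0,S_T)$ with $S_0>0$, $S_T\ge0$ a.s., $S_T\ne0$. For $\mathcal{B}\subset L^\infty$, $\rho_{\mathcal{B},S}(X)=\inf\{m\in\mathbb{R}:X+\frac{m}{S_0}S_T\in\mathcal{B}\}$. For a convex, law-invariant acceptance set $\mathcal{A}\subset L^\infty$ with $\rho_{\mathcal{A},S}$ finite-valued on $L^\infty$, $\mathrm{Index}_{\mathrm{fin}}(\rho_{\mathcal{A},S})=\inf\{p\in[1,\infty):\text{the closure of }\mathcal{A}\text{ in }L^p\text{ has nonempty interior in }L^p\}$, with $\inf\emptyset=\infty$. *)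

(* Defs.v *)
From HB Require Import structures.
From mathcomp Require Import all_boot all_order all_algebra.
From mathcomp Require Import all_classical all_reals all_analysis.
Set Implicit Arguments. Unset Strict Implicit. Unset Printing Implicit Defensive.
Import Order.TTheory GRing.Theory Num.Theory.
Local Open Scope classical_set_scope.
Local Open Scope ring_scope.

Section Defs.
Context d (T : measurableType d) (R : realType) (P : probability T R).

Definition nonatomic : Prop :=
  forall A : set T, measurable A -> (0 < P A)%E ->
    exists B : set T, [/\ measurable B, B `<=` A, (0 < P B)%E & (P B < P A)%E].

Definition Linf : set (T -> R) := [set X | X \in Lfun P +oo%E].
Definition Lp (p : R) : set (T -> R) := [set X | X \in Lfun P p%:E].

Definition Lp_dist (p : R) (X Y : T -> R) : \bar R :=
  Lnorm P p%:E (EFin \o (X \- Y)).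

Definition rho (B : set (T -> R)) (S0 : R) (ST : T -> R) (X : T -> R) : \bar R :=
  ereal_inf (EFin @` [set m : R | B (fun w => X w + m / S0 * ST w)]).

Definition finite_valued_on_Linf (B : set (T -> R)) (S0 : R) (ST : T -> R) :=
  forall X, Linf X -> rho B S0 ST X \is a fin_num.

Definition Lp_closure (p : R) (A : set (T -> R)) : set (T -> R) :=
  [set Y | Lp p Y /\ forall e : R, 0 < e ->
     exists X, [/\ A X, Lp p X & (Lp_dist p X Y < e%:E)%E]].

Definition Lp_interior_nonempty (p : R) (C : set (T -> R)) : Prop :=
  exists Y, Lp p Y /\ C Y /\ exists e : R, 0 < e /\
    forall Z, Lp p Z -> (Lp_dist p Z Y < e%:E)%E -> C Z.

(* Index_fin: inf { p in [1,oo) : cl_{L^p}(A) has nonempty L^p-interior },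
   with inf of the empty set = +oo *)
Definition IndexFin (A : set (T -> R)) : \bar R :=
  ereal_inf (EFin @` [set p : R | 1 <= p /\ Lp_interior_nonempty p (Lp_closure p A)]).

Definition u_exp (gamma : R) (x : R) : R := 1 - expR (- (gamma * x)).

Definition A_u (gamma alpha : R) : set (T -> R) :=
  [set X | Linf X /\ (alpha%:E <= \int[P]_w (u_exp gamma (X w))%:E)%E].

End Defs.

(* Main.v *)
Set Warnings "-notation-overridden,-ambiguous-paths,-notation-incompatible-prefix".
Require Import Defs.
From HB Require Import structures.
From mathcomp Require Import all_boot all_order all_algebra.
From mathcomp Require Import all_classical all_reals all_analysis.
From mathcomp Require Import lra ring measurable_realfun.
Import Order.TTheory GRing.Theory Num.Theory.
Local Open Scope classical_set_scope.
Local Open Scope ring_scope.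
Section S.
Context {d : measure_display} {T : measurableType d} {R : realType} (P : probability T R).
Local Open Scope ereal_scope.

Lemma Pfin (A : set T) : measurable A -> P A \is a fin_num.
Proof.
move=> mA; rewrite ge0_fin_numE ?measure_ge0//.
exact: (le_lt_trans (probability_le1 P mA)) (ltry _).
Qed.

Lemma halving : nonatomic P -> forall A, measurable A -> 0 < P A ->
  forall n : nat, exists B, [/\ measurable B, B `<=` A, 0 < P B &
     P B <= (((2:R)^-1) ^+ n)%:E].
Proof.
rewrite /nonatomic => nA A mA PA n; elim: n => [|n [B [mB BA PB0 PBn]]].
  exists A; split => //; rewrite expr0; exact: probability_le1.
have [C [mC CB PC0 PCB]] := nA B mB PB0.
have fB := @Pfin B mB. have fC := @Pfin C mC.
rewrite -(fineK fB) in PBn PB0 PCB. rewrite -(fineK fC) in PC0 PCB.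
rewrite lte_fin in PB0 PCB PC0. rewrite lee_fin in PBn.
have [small|big] := lerP (fine (P C)) ((2:R)^-1 ^+ n.+1).
  exists C; split => //; [exact: subset_trans CB BA|by rewrite -(fineK fC) lte_fin|by rewrite -(fineK fC) lee_fin].
exists (B `\` C); split.
- exact: measurableD.
- by move=> x [/BA].
- rewrite measureD// ?(setIidr CB); last exact: (le_lt_trans (probability_le1 P mB) (ltry _)).
  rewrite [X in X - _](_ : _ = (fine (P B))%:E); last exact: (esym (fineK fB)).
  rewrite [X in _ - X](_ : _ = (fine (P C))%:E); last exact: (esym (fineK fC)).
  by rewrite -EFinB lte_fin subr_gt0 -lte_fin.
- rewrite measureD// ?(setIidr CB); last exact: (le_lt_trans (probability_le1 P mB) (ltry _)).
  rewrite [X in X - _](_ : _ = (fine (P B))%:E); last exact: (esym (fineK fB)).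
  rewrite [X in _ - X](_ : _ = (fine (P C))%:E); last exact: (esym (fineK fC)).
  rewrite -EFinB lee_fin.
  rewrite exprS in big *.
  move: big PBn; set a := (_ ^+ n)%R; move=> big PBn.
  have : (0 <= a)%R by rewrite exprn_ge0// invr_ge0.
  lra.
Qed.

Lemma small_subset : nonatomic P -> forall A, measurable A -> 0 < P A ->
  forall eps : R, (0 < eps)%R -> exists B, [/\ measurable B, B `<=` A, 0 < P B &
     P B <= eps%:E].
Proof.
move=> nA A mA PA eps e0.
have [N NP] : exists N : nat, (eps^-1 < N%:R)%R.
  by exists (Num.Def.archi_bound eps^-1); apply: archi_boundP; rewrite invr_ge0 ltW.
have [B [mB BA PB0 PBN]] := halving nA A mA PA N.
exists B; split => //; apply: (le_trans PBN); rewrite lee_fin.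
have h2 : (N%:R < (2:R) ^+ N)%R by rewrite -natrX ltr_nat ltn_expl.
rewrite exprVn; apply: ltW.
have h2p : (0 < (2:R) ^+ N)%R by rewrite exprn_gt0.
rewrite -[eps]invrK ltf_pV2 ?posrE ?invr_gt0//.
exact: lt_trans h2.
Qed.

Lemma Lp_meas (p : R) Y : Lp P p Y -> measurable_fun setT Y.
Proof. by move=> /sub_Lfun_mfun; rewrite inE. Qed.

Lemma Linf_meas Y : Linf P Y -> measurable_fun setT Y.
Proof. by move=> /sub_Lfun_mfun; rewrite inE. Qed.

Lemma meas_le (Y : T -> R) (K : R) : measurable_fun setT Y ->
  measurable [set w | (Y w <= K)%R].
Proof.
move=> mY; have := mY measurableT _ (measurable_itv `]-oo, K]).
rewrite setTI; congr measurable; apply/seteqP; split => w /=; rewrite in_itv //.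
Qed.

Lemma exists_K (Y : T -> R) : measurable_fun setT Y ->
  exists K : R, 0 < P [set w | (Y w <= K)%R].
Proof.
move=> mY; apply/not_existsP => H.
have H0 : forall n : nat, P [set w | (Y w <= n%:R)%R] = 0.
  move=> n; apply/eqP; rewrite eq_le measure_ge0 andbT.
  by rewrite leNgt; apply/negP => h; apply: (H n%:R).
have cov : [set: T] `<=` \bigcup_n [set w | (Y w <= n%:R)%R].
  move=> w _; exists (Num.Def.archi_bound `|Y w|) => //=.
  apply: (le_trans (ler_norm _)); apply: ltW; exact: archi_boundP.
have := @measure_sigma_subadditive _ _ _ P setT (fun n : nat => [set w | (Y w <= n%:R)%R])
  (fun n => @meas_le Y _ mY) measurableT cov.
rewrite eseries0; last by move=> i _ _; exact: H0.
rewrite [X in X <= _ -> _](_ : _ = 1); first by rewrite lee_fin ler10.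
exact: probability_setT.
Qed.

Lemma le_integral_m (f g : T -> \bar R) : measurable_fun [set: T] f ->
  P.-integrable setT g -> (forall w, f w <= g w) ->
  \int[P]_w f w <= \int[P]_w g w.
Proof.
move=> mf intg fg; rewrite integralE [leRHS]integralE; apply: leeB.
- apply: ge0_le_integral => //.
  + exact: measurable_funepos.
  + by move/integrableP : intg => [+ _]; exact: measurable_funepos.
  + by move=> x _; apply: (@funepos_le _ _ setT); [move=> y _; exact: fg|rewrite in_setT].
- apply: ge0_le_integral => //.
  + by move/integrableP : intg => [+ _]; exact: measurable_funeneg.
  + exact: measurable_funeneg.
  + by move=> x _; apply: (@funeneg_le _ _ setT); [move=> y _; exact: fg|rewrite in_setT].
Qed.

Lemma Lnorm_indic (p c : R) (B : set T) : measurable B -> (0 < p)%R -> (0 <= c)%R ->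
  Lnorm P p%:E (fun w => (- (c * \1_B w))%:E) = (c * (fine (P B)) `^ p^-1)%:E.
Proof.
move=> mB p0 c0; rewrite unlock /=.
rewrite (eq_integral (fun x => ((c `^ p) * \1_B x)%:E)); last first.
  move=> x _; congr EFin; rewrite normrN normrM (ger0_norm c0) indicE.
  by case: (x \in B) => /=; rewrite ?normr1 ?normr0 ?mulr1 ?mulr0 ?powR0 ?gt_eqF.
rewrite (@integralZl_indic _ _ _ _ _ measurableT (fun _ => B)) //; last first.
  by move=> h; move: (powR_ge0 c p); rewrite leNgt h.
rewrite integral_indic // setIT.
rewrite [X in _ * X](_ : _ = (fine (P B))%:E); last exact: (esym (fineK (Pfin B mB))).
rewrite -EFinM poweR_EFin powRM ?powR_ge0 ?fine_ge0 ?measure_ge0//.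
by rewrite -powRrM mulfV ?gt_eqF// powRr1.
Qed.

Lemma G_small (p eta : R) (f : T -> R) : measurable_fun setT f -> (0 < p)%R -> (0 < eta)%R ->
  Lnorm P p%:E (EFin \o f) < (eta `^ p^-1)%:E ->
  P (~` [set w | (`|f w| <= 1)%R]) < eta%:E.
Proof.
move=> mf p0 e0 hL.
set G := ~` _.
have mG : measurable G.
  apply: measurableC; apply: (@meas_le (fun w => `|f w|%R) 1); exact: measurableT_comp.
rewrite ltNge; apply/negP => hG.
have PI : P G <= \int[P]_w (`|(f w)%:E| `^ p).
  apply: (@le_trans _ _ (\int[P]_w (\1_G w)%:E)).
    by rewrite integral_indic // setIT.
  apply: ge0_le_integral => //.
  - by apply/measurable_EFinP; exact: measurable_indic.
  - apply: (measurableT_comp (measurable_poweR _)).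
    apply: measurableT_comp => //; exact/measurable_EFinP.
  - move=> x _; rewrite indicE; case: (boolP (x \in G)) => /= xG; last by rewrite lee_fin powR_ge0.
    rewrite ?abse_EFin ?poweR_EFin lee_fin.
    have : (1 <= `|f x|)%R.
      by move: xG; rewrite inE /G /= => /negP; rewrite -ltNge => /ltW.
    move=> h1; rewrite -(powRr0 `|f x|); exact: (ler_powR h1 (ltW p0)).
have pi0 : (0 <= p^-1)%R by rewrite invr_ge0 ltW.
have h : (eta%:E) `^ p^-1 <= (\int[P]_w (`|(f w)%:E| `^ p)) `^ p^-1.
  apply: gt0_ler_poweR => //; last exact: le_trans hG PI.
  - by rewrite in_itv /= lee_fin (ltW e0) leey.
  - by rewrite in_itv /= leey andbT; apply: integral_ge0 => x _; by [apply: poweR_ge0 | rewrite lee_fin powR_ge0 | rewrite /= lee_fin powR_ge0].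
move: hL; rewrite unlock /= => hL.
have := lt_le_trans hL h.
move=> H; move: (lt_eqF H) => /negbT/negP; apply; apply/eqP; reflexivity.
Qed.

Lemma int_u (gamma L : R) (X : T -> R) (F : set T) : measurable_fun setT X ->
  measurable F -> (0 <= L)%R ->
  (forall w, F w -> (u_exp gamma (X w) <= 1 - L)%R) ->
  \int[P]_w (u_exp gamma (X w))%:E <= (1 - L * fine (P F))%:E.
Proof.
move=> mX mF L0 hF.
have i1 := finite_measure_integrable_cst P 1 (@measurableT _ T).
have i2 := integrableZl measurableT L (integrable_indic P mF).
have ig : P.-integrable setT (fun w => (1 - L * \1_F w)%:E).
  apply: (eq_integrable measurableT _ _ _ (integrableB measurableT i1 i2)) => x _ /=.
  by rewrite EFinB EFinM.
apply: (le_trans (@le_integral_m _ (fun w => (1 - L * \1_F w)%:E) _ ig _)).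
- apply/measurable_EFinP; rewrite /u_exp; apply: measurable_funB => //.
  apply: measurableT_comp => //; apply: measurableT_comp => //.
  exact: measurable_funM.
- move=> x; rewrite lee_fin indicE; case: (boolP (x \in F)) => /= xF.
    by rewrite mulr1; apply: hF; rewrite inE in xF.
  rewrite mulr0 subr0 /u_exp; have := expR_ge0 (- (gamma * X x)); lra.
have -> : \int[P]_w (1 - L * \1_F w)%:E = \int[P]_w ((cst 1 w)%:E - (L * \1_F w)%:E).
  by apply: eq_integral => x _; rewrite EFinB.
rewrite integralB_EFin //.
rewrite (_ : \int[P]_x (cst 1%R x)%:E = 1 * P setT); last exact: (integral_cst P measurableT 1).
rewrite (@integralZl_indic _ _ _ _ _ measurableT (fun _ => F)) //; last first.
  by move=> h; move: L0; rewrite leNgt h.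
rewrite integral_indic // setIT.
rewrite [X in 1 * X](_ : _ = 1); last exact: probability_setT.
rewrite [X in L%:E * X](_ : _ = (fine (P F))%:E); last exact: (esym (fineK (Pfin F mF))).
by rewrite mul1e -EFinM -EFinB.
Qed.
End S.

Lemma numeric (R : realType) (a b C p : R) : 0 < a -> 1 <= p ->
  exists q0 : R, 0 < q0 /\ forall q, 0 < q -> q <= q0 -> C <= expR (a / q - b) * q `^ p.
Proof.
move=> a0 p1.
set N := Num.Def.archi_bound p.
have pN : p <= N%:R by apply/ltW/archi_boundP; lra.
set F : R := (N.+1)`!%:R.
have F0 : 0 < F by rewrite ltr0n fact_gt0.
set M := expR (- b) * a ^+ N.+1 / F.
have M0 : 0 < M by rewrite /M divr_gt0// mulr_gt0 ?expR_gt0 ?exprn_gt0.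
have C1 : 0 < `|C| + 1 by rewrite ltr_wpDl.
exists (Num.min 1 (M / (`|C| + 1))); split.
  by rewrite lt_min ltr01 divr_gt0.
move=> q q0; rewrite le_min => /andP[q1 qM].
have h1 : q ^+ N <= q `^ p.
  by rewrite -powR_mulrn ?(ltW q0)//; apply: (ger_powR _ pN); rewrite q0 q1.
have h2 : (a / q) ^+ N.+1 / F <= expR (a / q).
  apply: le_trans (expR_ge1Dxn N _); last by rewrite divr_ge0 ?ltW.
  by rewrite lerDr.
have h3 : M / q <= expR (a / q - b) * q `^ p.
  have e1 : expR (a / q - b) * q `^ p = expR (-b) * (expR (a/q) * q `^ p).
    by rewrite expRD; ring.
  rewrite e1; apply: (le_trans _ (ler_wpM2l (expR_ge0 _) (ler_wpM2l (expR_ge0 _) h1))).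
  apply: (le_trans _ (ler_wpM2l (expR_ge0 _) (ler_wpM2r (exprn_ge0 _ (ltW q0)) h2))).
  rewrite /M expr_div_n exprSr.
  have qN : q ^+ N != 0 by rewrite expf_neq0 // gt_eqF.
  rewrite le_eqVlt; apply/orP; left; apply/eqP.
  rewrite [q ^+ N.+1]exprSr; field. by rewrite qN !gt_eqF.
apply: le_trans h3.
have : `|C| + 1 <= M / q.
  rewrite ler_pdivlMr// mulrC -ler_pdivlMr//.
move=> h4; apply: (le_trans _ h4); apply: (le_trans (ler_norm C)); by rewrite lerDl.
Qed.


Theorem corollary6p7 (d : measure_display) (T : measurableType d) (R : realType)
    (P : probability T R) (gamma alpha S0 : R) (ST : T -> R) :
  nonatomic P ->
  0 < gamma -> alpha < 1 ->
  (* traded asset S = (S0, ST): S0 > 0, ST >= 0 a.s., ST <> 0, ST in L^infty *)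
  0 < S0 ->
  Linf P ST ->
  {ae P, forall w, 0 <= ST w} ->
  ~ {ae P, forall w, ST w = 0} ->
  finite_valued_on_Linf P (A_u P gamma alpha) S0 ST ->
  IndexFin P (A_u P gamma alpha) = +oo%E.
Proof.
move=> nA g0 a1 _ _ _ _ _.
rewrite /IndexFin.
suff -> : [set p : R | 1 <= p /\ Lp_interior_nonempty P p (Lp_closure P p (A_u P gamma alpha))] = set0.
  by rewrite image_set0 ereal_inf0.
apply/seteqP; split => // p [p1 [Y [LY [_ [e [e0 HZ]]]]]].
have p0 : 0 < p by lra.
have p1E : (1 <= p%:E)%E by rewrite lee_fin.
have mY := Lp_meas P _ _ LY.
have [K PK] := exists_K P _ mY.
have mA0 := meas_le _ K mY.
have [q0 [q00 Hq]] := @numeric R (gamma * e / 2) (gamma * (K + 1)) (2 * (1 - alpha)) p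
  (divr_gt0 (mulr_gt0 g0 e0) (@ltr0Sn R 1)) p1.
have eps0 : 0 < q0 `^ p by rewrite powR_gt0.
have [B [mB BA PB0 PBe]] := small_subset P nA _ mA0 PK _ eps0.
have fB := Pfin P _ mB.
set δ := fine (P B).
have δ0 : 0 < δ by rewrite /δ -lte_fin fineK.
have δe : δ <= q0 `^ p by rewrite /δ -lee_fin fineK.
set q := δ `^ p^-1.
have q0' : 0 < q by rewrite powR_gt0.
have qq0 : q <= q0.
  have h : δ `^ p^-1 <= (q0 `^ p) `^ p^-1.
    apply: ge0_ler_powR => //; [by rewrite invr_ge0 (ltW p0) | by rewrite nnegrE (ltW δ0) | by rewrite nnegrE powR_ge0].
  move: h; rewrite -powRrM mulfV ?gt_eqF // powRr1 //; exact: ltW.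
have qp : q `^ p = δ by rewrite /q -powRrM mulVf ?gt_eqF // powRr1 // ltW.
set c := e / (2 * q).
have c0 : 0 <= c by rewrite /c divr_ge0 ?ltW // mulr_gt0.
set h := fun w => - (c * \1_B w).
have mh : measurable_fun setT h.
  apply: measurableT_comp => //; apply: measurable_funM => //; exact: measurable_indic.
have Nh : Lnorm P p%:E (EFin \o h) = (c * q)%:E by apply: (Lnorm_indic P _ _ _ mB p0 c0).
have cq : c * q = e / 2 by rewrite /c; field; rewrite gt_eqF.
have Lh : h \in Lfun P p%:E.
  rewrite inE; apply/andP; split; first by rewrite inE.
  by rewrite inE /= /finite_norm Nh ltry.
set Z := fun w => Y w + h w.
have LZ : Lp P p Z by exact: ((Lfun_addr_closed P p1E).2 Y h LY Lh).
have mZ : measurable_fun setT Z by exact: Lp_meas P _ _ LZ.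
have dZ : (Lp_dist P p Z Y < e%:E)%E.
  rewrite /Lp_dist (eq_Lnorm _ _ (g := EFin \o h)); last first.
    by move=> w /=; rewrite /Z addrAC subrr add0r.
  by rewrite Nh cq lte_fin; lra.
have [_ HC] := HZ Z LZ dZ.
set η := (δ / 2) `^ p^-1.
have η0 : 0 < η by rewrite powR_gt0 // divr_gt0.
have [X [[LiX aX] _ dXZ]] := HC η η0.
have mX := Linf_meas P _ LiX.
set f := fun w => X w - Z w.
have mf : measurable_fun setT f by exact: measurable_funB.
have PG := G_small P _ _ _ mf p0 (divr_gt0 δ0 (@ltr0Sn R 1)) dXZ.
set S := [set w | `|f w| <= 1].
have mS : measurable S := meas_le _ 1 (measurableT_comp (@normr_measurable R setT) mf).
set F := B `&` S.
have mF : measurable F by exact: measurableI.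
have hD : (P (B `\` S) = P B - P F)%E.
  exact: (measureD mB mS (le_lt_trans (probability_le1 P mB) (ltry _))).
have hle : (P (B `\` S) <= P (~` S))%E.
  by apply: le_measure; rewrite ?inE; [exact: measurableD|exact: measurableC|move=> w []].
have fD := Pfin P _ (measurableD mB mS).
have fF := Pfin P _ mF.
have fG := Pfin P _ (measurableC mS).
have hF : fine (P F) > δ / 2.
  have hD' : fine (P (B `\` S)) = δ - fine (P F) by rewrite hD fineB.
  have hle' : fine (P (B `\` S)) <= fine (P (~` S)) by exact: fine_le.
  have PG' : fine (P (~` S)) < δ / 2 by exact: (@fine_lt _ _ (δ / 2)%:E).
  lra.
set L := expR (gamma * (c - K - 1)).
have L0 : 0 < L by exact: expR_gt0.
have hu : forall w, F w -> u_exp gamma (X w) <= 1 - L.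
  move=> w [Bw Sw].
  have YK : Y w <= K by exact: BA.
  have hw : h w = - c by rewrite /h indicE mem_set // mulr1.
  move: Sw; rewrite /S /= /f /Z hw => /ler_normlP [_ Hx].
  rewrite /u_exp /L; apply: lerB => //; rewrite ler_expR.
  nra.
have IU := int_u P _ _ _ _ mX mF (ltW L0) hu.
have CL : 2 * (1 - alpha) <= L * δ.
  have := Hq q q0' qq0; rewrite qp /L.
  suff -> : gamma * e / 2 / q - gamma * (K + 1) = gamma * (c - K - 1) by [].
  by rewrite /c; field; rewrite gt_eqF.
have := le_trans aX IU; rewrite lee_fin.
nra.
Qed.
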